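(* Let $(V,E)$ be a finite graph and $p\in[0,1]$. Let $(\eta_t,\sigma_t)_{t\ge0}$ be a continuous-time Markov jump process on $\{0,1\}^E\times\{-1,1\}^V$ with the following rates: (a) if $\sigma'=\sigma$ and there is $e\in E$ with $\eta'=\eta^e$ and $\gamma_\eta(e)=1$, then $c((\eta,\sigma),(\eta',\sigma'))=\big((1-p)\mathbf 1_{\eta(e)=1}+p\mathbf 1_{\eta(e)=0}\big)\mathbf 1_{(\eta,\sigma)\in\mathcal C}$; (b) if $\sigma'=\sigma$ and there is $e\in E$ with $\eta'=\eta^e$, $\gamma_\eta(e)=0$ and $\delta_\sigma(e)=1$, then $c((\eta,\sigma),(\eta',\sigma'))=\frac12\big((1-p)\mathbf 1_{\eta(e)=1}+p\mathbf 1_{\eta(e)=0}\big)\mathbf 1_{(\eta,\sigma)\in\mathcal C}$; (c) if there are $x\in V$ and $e\in E_x$ with $\sigma'=\sigma^x$, $\eta'=\eta^e$, $\gamma_\eta(e)=0$, $\eta(e)=\delta_\sigma(e)$ and $\eta(f)=0$ for all $f\in E_x\setminus\{e\}$, then $c((\eta,\sigma),(\eta',\sigma'))=\frac14\big((1-p)\mathbf 1_{\eta(e)=1}\mathbf 1_{(\eta,\sigma)\in\mathcal C}+p\mathbf 1_{\eta(e)=0}\mathbf 1_{(\eta',\sigma')\in\mathcal C}\big)$; (d) all other off-diagonal rates are $0$. Suppose $(\eta_0,\sigma_0)$ is distributed according to $IP$. Then for every $x\in V$, $\sigma\in\{-1,1\}^V$ and $s\ge0$, $$\lim_{t\to0}\frac1t\,\mathbb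 P(\sigma_{t+s}=\sigma^x\mid\sigma_s=\sigma)=\frac14\,|E_x|\,p\,(1-p)^{|\{e\in E_x:\ \delta_\sigma(e)=1\}|}.$$
   Context: Edge configurations $\eta\in\{0,1\}^E$ (1 = open), spin configurations $\sigma\in\{-1,1\}^V$. For $e=\langle x,y\rangle$, $\delta_\sigma(e)=\mathbf 1_{\sigma(x)=\sigma(y)}$. $\mathcal C=\{(\eta,\sigma):\eta(e)\le\delta_\sigma(e)\ \forall e\in E\}$. $IP(\eta,\sigma)=\frac1Z\prod_{e\in E}\big(p\mathbf 1_{\eta(e)=1}\delta_\sigma(e)+(1-p)\mathbf 1_{\eta(e)=0}\big)$ with $Z$ the normalizing constant. $E_x$ is the set of edges with endvertex $x$; $\sigma^x$ is $\sigma$ with the spin at $x$ flipped; $\eta^e$ is $\eta$ with the value at $e$ changed. For $e=\langle x,y\rangle$, $\gamma_\eta(e)=1$ if $x,y$ are connected by a path of open edges of $\eta$ not using $e$, and $0$ otherwise. *)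

(* Defs.v *)
From HB Require Import structures.
From mathcomp Require Import all_boot all_order all_algebra.
From mathcomp Require Import all_classical all_reals all_analysis.
Set Implicit Arguments. Unset Strict Implicit. Unset Printing Implicit Defensive.
Import Order.TTheory GRing.Theory Num.Theory.
Local Open Scope ring_scope.

(* Simplicity (no loops, no multi-edges) is assumed as
   a hypothesis of the theorem (see simple_graph).  Spins in {-1,1} are
   encoded as booleans (true = +1, false = -1); only equality of spins and
   spin flips matter. *)

Section Model.
Variables (V E : finType) (end1 end2 : E -> V).

Definition simple_graph : Prop :=
  (forall e, end1 e != end2 e) /\
  (forall e f, [set end1 e; end2 e] = [set end1 f; end2 f] -> e = f).

Definition edge_conf := {ffun E -> bool}.   (* eta, true = open *)
Definition spin_conf := {ffun V -> bool}.
Definition state := (edge_conf * spin_conf)%type.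

Definition delta (s : spin_conf) (e : E) : bool := s (end1 e) == s (end2 e).

Definition inC (a : state) : bool := [forall e, a.1 e ==> delta a.2 e].

Definition Ex (x : V) : {set E} := [set e | (end1 e == x) || (end2 e == x)].

Definition flipE (n : edge_conf) (e : E) : edge_conf :=
  [ffun f => if f == e then ~~ n f else n f].
Definition flipV (s : spin_conf) (x : V) : spin_conf :=
  [ffun y => if y == x then ~~ s y else s y].

Definition open_adj_without (n : edge_conf) (e : E) : rel V :=
  fun a b => [exists f, [&& f != e, n f &
     ((end1 f == a) && (end2 f == b)) || ((end1 f == b) && (end2 f == a))]].

Definition gamma (n : edge_conf) (e : E) : bool :=
  connect (open_adj_without n e) (end1 e) (end2 e).

Variable R : realType.
Variable p : R.

Definition IPweight (a : state) : R :=
  \prod_(e : E) (if a.1 e then p * (delta a.2 e)%:R else 1 - p).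
Definition IP (a : state) : R := IPweight a / \sum_(b : state) IPweight b.

(* Since eta' = eta^e determines e and
   sigma' = sigma^x determines x, each sum below has at most one nonzero
   term, i.e. it is exactly the case distinction (a)-(d) of the paper. *)
Definition rate (a b : state) : R :=
  let: (n, s) := a in let: (n', s') := b in
  \sum_(e : E) ((s' == s) && (n' == flipE n e) && gamma n e)%:R *
      ((1 - p) * (n e)%:R + p * (~~ n e)%:R) * (inC a)%:R
  + \sum_(e : E) [&& s' == s, n' == flipE n e, ~~ gamma n e & delta s e]%:R *
      (1 / 2 * ((1 - p) * (n e)%:R + p * (~~ n e)%:R) * (inC a)%:R)
  + \sum_(x : V) \sum_(e in Ex x)
      [&& s' == flipV s x, n' == flipE n e, ~~ gamma n e,
          n e == delta s e & [forall f in Ex x, (f != e) ==> ~~ n f]]%:R *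
      (1 / 4 * ((1 - p) * (n e)%:R * (inC a)%:R
                + p * (~~ n e)%:R * (inC b)%:R)).

Definition Qgen (a b : state) : R :=
  if a == b then - \sum_(c : state | c != a) rate a c else rate a b.

Fixpoint Qpow (k : nat) (a b : state) : R :=
  match k with
  | 0 => (a == b)%:R
  | k.+1 => \sum_(c : state) Qgen a c * Qpow k c b
  end.

(* transition function P_t = exp(tQ) of the Markov jump process *)
Definition Ptrans (t : R) (a b : state) : R :=
  limn (fun N => \sum_(0 <= k < N) (t ^+ k / (k`!)%:R * Qpow k a b)).

Definition law_at (s : R) (b : state) : R := \sum_(a : state) IP a * Ptrans s a b.

Definition prob_spin_at (s : R) (sg : spin_conf) : R :=
  \sum_(a : state | a.2 == sg) law_at s a.

(* P(sigma_s = sg, sigma_{s+t} = sg') by the Markov property *)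
Definition prob_spin_pair (s t : R) (sg sg' : spin_conf) : R :=
  \sum_(a : state | a.2 == sg) \sum_(b : state | b.2 == sg')
     law_at s a * Ptrans t a b.

Definition cond_prob (s t : R) (sg sg' : spin_conf) : R :=
  prob_spin_pair s t sg sg' / prob_spin_at s sg.

End Model.

(* Main.v *)
Require Import Defs.
From HB Require Import structures.
From mathcomp Require Import all_boot all_order all_algebra.
From mathcomp Require Import all_classical all_reals all_analysis.
From mathcomp Require Import ring lra.
Import Order.TTheory GRing.Theory Num.Theory.
Local Open Scope ring_scope.
Import numFieldNormedType.Exports.
Local Open Scope classical_set_scope.
Set Implicit Arguments. Unset Strict Implicit. Unset Printing Implicit Defensive.

Section Comb.
Variables (V E : finType) (end1 end2 : E -> V) (R : realType) (p : R).
Hypothesis hG : simple_graph end1 end2.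

Local Notation delta := (delta end1 end2).
Local Notation inC := (inC end1 end2).
Local Notation Ex := (Ex end1 end2).
Local Notation gamma := (gamma end1 end2).
Local Notation IPw := (IPweight end1 end2 p).
Local Notation rate := (rate end1 end2 p).

Lemma flipE_e (n : edge_conf E) e : flipE n e e = ~~ n e.
Proof. by rewrite ffunE eqxx. Qed.
Lemma flipE_ne (n : edge_conf E) e f : f != e -> flipE n e f = n f.
Proof. by move=> h; rewrite ffunE (negbTE h). Qed.
Lemma flipE_invol (n : edge_conf E) e : flipE (flipE n e) e = n.
Proof. by apply/ffunP => f; rewrite !ffunE; case: eqP => // ->; rewrite negbK. Qed.
Lemma flipE_eq (n n' : edge_conf E) e : (n' == flipE n e) = (n == flipE n' e).
Proof. by apply/eqP/eqP => ->; rewrite flipE_invol. Qed.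
Lemma flipV_invol (s : spin_conf V) x : flipV (flipV s x) x = s.
Proof. by apply/ffunP => f; rewrite !ffunE; case: eqP => // ->; rewrite negbK. Qed.
Lemma flipV_eq (s s' : spin_conf V) x : (s' == flipV s x) = (s == flipV s' x).
Proof. by apply/eqP/eqP => ->; rewrite flipV_invol. Qed.

Lemma oaw_flip (n : edge_conf E) e : open_adj_without end1 end2 (flipE n e) e =2 open_adj_without end1 end2 n e.
Proof.
move=> a b; apply: eq_existsb => f.
by case: (eqVneq f e) => //= fe; rewrite flipE_ne.
Qed.

Lemma gamma_flip (n : edge_conf E) e : gamma (flipE n e) e = gamma n e.
Proof. by rewrite /Defs.gamma (eq_connect (oaw_flip n e)). Qed.

Lemma oaw_sym (n : edge_conf E) e : symmetric (open_adj_without end1 end2 n e).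
Proof.
move=> a b; apply: eq_existsb => f; by rewrite orbC.
Qed.

Lemma connect_spin (n : edge_conf E) (s : spin_conf V) e u v :
  inC (n, s) -> connect (open_adj_without end1 end2 n e) u v -> s u = s v.
Proof.
move=> /forallP hC /connectP [ps]; elim: ps u => [|w ps IH] u /=; first by move=> _ ->.
move=> /andP[ruw pw] hv; rewrite -(IH w pw hv).
case/existsP: ruw => f /and3P[_ nf h]; have := hC f; rewrite /= nf /= /Defs.delta.
by case/orP: h => /andP[/eqP-> /eqP->] /eqP // ->.
Qed.

Lemma inC_gamma_delta (n : edge_conf E) (s : spin_conf V) e :
  inC (n, s) -> gamma n e -> delta s e.
Proof. by move=> hC hg; apply/eqP; apply: connect_spin hC hg. Qed.

Lemma inC_flip_delta (n : edge_conf E) (s : spin_conf V) e :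
  delta s e -> inC (flipE n e, s) = inC (n, s).
Proof.
move=> hd; apply: eq_forallb => f /=.
by case: (eqVneq f e) => [->|fe]; [rewrite hd !implybT | rewrite flipE_ne].
Qed.

Lemma inC_gamma (n : edge_conf E) (s : spin_conf V) e :
  gamma n e -> inC (flipE n e, s) = inC (n, s).
Proof.
move=> hg; case hd: (delta s e); first by rewrite inC_flip_delta.
have h1 : inC (n, s) = false by apply/negbTE/negP => hC; have := inC_gamma_delta hC hg; rewrite hd.
have h2 : inC (flipE n e, s) = false.
  by apply/negbTE/negP => hC; have := inC_gamma_delta hC (etrans (gamma_flip n e) hg); rewrite hd.
by rewrite h1 h2.
Qed.

Lemma IPw_flip (n : edge_conf E) (s : spin_conf V) e :
  IPw (n, s) * (if n e then 1 - p else p * (delta s e)%:R) =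
  IPw (flipE n e, s) * (if n e then p * (delta s e)%:R else 1 - p).
Proof.
rewrite /IPweight /= (bigD1 e) //= [in RHS](bigD1 e) //= flipE_e.
have -> : \prod_(i | i != e) (if flipE n e i then p * (delta s i)%:R else 1 - p)
   = \prod_(i | i != e) (if n i then p * (delta s i)%:R else 1 - p).
  by apply: eq_bigr => i ie; rewrite flipE_ne.
by case: (n e) => /=; ring.
Qed.


Lemma delta_flipV_out (s : spin_conf V) x f : f \notin Ex x -> delta (flipV s x) f = delta s f.
Proof.
rewrite /Defs.Ex inE negb_or => /andP[h1 h2].
by rewrite /Defs.delta !ffunE (negbTE h1) (negbTE h2).
Qed.

Lemma delta_flipV_in (s : spin_conf V) x e : e \in Ex x -> delta (flipV s x) e = ~~ delta s e.
Proof.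
have he := hG.1 e.
rewrite /Defs.Ex inE /Defs.delta !ffunE => /orP[/eqP h|/eqP h].
  have h2 : end2 e != x by rewrite -h eq_sym.
  by rewrite h eqxx (negbTE h2); case: (s x); case: (s (end2 e)).
have h2 : end1 e != x by rewrite -h.
by rewrite h eqxx (negbTE h2); case: (s x); case: (s (end1 e)).
Qed.

Lemma IPw_flipV (n : edge_conf E) (s : spin_conf V) x :
  (forall f, f \in Ex x -> ~~ n f) -> IPw (n, flipV s x) = IPw (n, s).
Proof.
move=> h; apply: eq_bigr => f _ /=.
case hf: (f \in Ex x); first by rewrite (negbTE (h f hf)).
by rewrite delta_flipV_out ?hf.
Qed.

Lemma no_connect_from (r : rel V) u v : (forall w, ~~ r u w) -> v != u -> ~~ connect r u v.
Proof.
move=> hr hvu; apply/negP => /connectP [[|w ps]] /=; first by move=> _ h; rewrite h eqxx in hvu.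
by case/andP => h; rewrite (negbTE (hr w)) in h.
Qed.

Lemma gamma_isolated (n : edge_conf E) x e :
  e \in Ex x -> [forall f in Ex x, (f != e) ==> ~~ n f] -> ~~ gamma n e.
Proof.
move=> hex /forall_inP hall.
have hr : forall w, ~~ open_adj_without end1 end2 n e x w.
  move=> w; apply/negP => /existsP [f /and3P[fe nf h]].
  have fx : f \in Ex x.
    by rewrite /Defs.Ex inE; case/orP: h => /andP[/eqP-> /eqP->]; rewrite eqxx ?orbT.
  by have := hall f fx; rewrite fe nf.
have he := hG.1 e.
rewrite /Defs.gamma; move: hex; rewrite /Defs.Ex inE => /orP[/eqP h|/eqP h].
  by rewrite h; apply: no_connect_from => //; rewrite -h eq_sym.
rewrite (sym_connect_sym (oaw_sym n e)) h; apply: no_connect_from => //; by rewrite -h.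
Qed.

Definition indC (n : edge_conf E) (s : spin_conf V) (n' : edge_conf E) (s' : spin_conf V) x e :=
  [&& s' == flipV s x, n' == flipE n e, ~~ gamma n e,
          n e == delta s e & [forall f in Ex x, (f != e) ==> ~~ n f]].

Lemma indC_sym n s n' s' x e : e \in Ex x -> indC n s n' s' x e = indC n' s' n s x e.
Proof.
move=> hex; rewrite /indC -flipV_eq -flipE_eq.
case: eqP => //= ->; case: eqP => //= ->.
rewrite gamma_flip flipE_e delta_flipV_in //.
rewrite (_ : forall a b : bool, (~~ a == ~~ b) = (a == b)); last by case; case.
do 2 congr (_ && _).
apply: eq_forallb => f.
by case: (eqVneq f e) => //= fe; rewrite flipE_ne.
Qed.

Definition valC (n : edge_conf E) (s : spin_conf V) (n' : edge_conf E) (s' : spin_conf V) e :=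
  1 / 4 * ((1 - p) * (n e)%:R * (inC (n, s))%:R + p * (~~ n e)%:R * (inC (n', s'))%:R).

Lemma termC_true n s x e : e \in Ex x -> indC n s (flipE n e) (flipV s x) x e -> n e ->
  IPw (n, s) * valC n s (flipE n e) (flipV s x) e =
  IPw (flipE n e, flipV s x) * valC (flipE n e) (flipV s x) n s e.
Proof.
move=> hex /and5P[_ _ _ /eqP hd /forall_inP hall] hne.
rewrite /valC flipE_e hne /=.
have hd' : delta s e by rewrite -hd.
have := IPw_flip n s e; rewrite hne hd' /= => h1.
rewrite IPw_flipV; last first.
  move=> f hf; case: (eqVneq f e) => [->|fe]; first by rewrite flipE_e hne.
  by rewrite flipE_ne //; have := hall f hf; rewrite fe.
rewrite !mulr1 !mulr0 ?addr0 ?add0r !mul1r !mul0r add0r addr0; rewrite mulr1 in h1.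
transitivity (IPw (n, s) * (1 - p) * (4^-1 * (inC (n, s))%:R)); first ring.
by rewrite h1; ring.
Qed.

Lemma termC_db n s n' s' x e : e \in Ex x ->
  IPw (n, s) * ((indC n s n' s' x e)%:R * valC n s n' s' e) =
  IPw (n', s') * ((indC n' s' n s x e)%:R * valC n' s' n s e).
Proof.
move=> hex; rewrite [in RHS](indC_sym n' s' n s hex).
case hi: (indC n s n' s' x e); last by rewrite !mul0r !mulr0.
rewrite !mul1r.
have hi' := hi; move: hi' => /and5P[/eqP hs /eqP hn _ _ _]; subst s' n'.
case hne: (n e); first by apply: termC_true.
rewrite indC_sym // in hi.
have hi2 : indC (flipE n e) (flipV s x) (flipE (flipE n e) e) (flipV (flipV s x) x) x e
  by rewrite flipE_invol flipV_invol.
have := termC_true hex hi2; rewrite flipE_e hne flipE_invol flipV_invol => h.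
by rewrite h.
Qed.


Definition Wt (n : edge_conf E) e : R := (1 - p) * (n e)%:R + p * (~~ n e)%:R.

Definition TA (n : edge_conf E) (s : spin_conf V) (n' : edge_conf E) (s' : spin_conf V) e :=
  ((s' == s) && (n' == flipE n e) && gamma n e)%:R * Wt n e * (inC (n, s))%:R.
Definition TB (n : edge_conf E) (s : spin_conf V) (n' : edge_conf E) (s' : spin_conf V) e :=
  [&& s' == s, n' == flipE n e, ~~ gamma n e & delta s e]%:R *
      (1 / 2 * Wt n e * (inC (n, s))%:R).

Lemma rateE n s n' s' : rate (n, s) (n', s') =
  \sum_e TA n s n' s' e + \sum_e TB n s n' s' e +
  \sum_x \sum_(e in Ex x) (indC n s n' s' x e)%:R * valC n s n' s' e.
Proof. by []. Qed.

Lemma W_flip (n : edge_conf E) (s : spin_conf V) e : delta s e ->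
  IPw (n, s) * Wt n e = IPw (flipE n e, s) * Wt (flipE n e) e.
Proof.
move=> hd; have := IPw_flip n s e; rewrite /Wt flipE_e hd.
by case: (n e) => /= h; rewrite ?mulr1 ?mulr0 ?addr0 ?add0r in h *; rewrite h.
Qed.

Lemma TA_db n s n' s' e : IPw (n, s) * TA n s n' s' e = IPw (n', s') * TA n' s' n s e.
Proof.
rewrite /TA.
case: (eqVneq s' s) => [->|hs]; last first.
  by rewrite /= !mul0r !mulr0.
case: (eqVneq n' (flipE n e)) => [->|hn]; last first.
  by rewrite -flipE_eq (negbTE hn) /= !mul0r !mulr0.
rewrite flipE_invol !eqxx gamma_flip /=.
case hg: (gamma n e); last by rewrite !mul0r !mulr0.
rewrite inC_gamma //.
case hC: (inC (n, s)); last by rewrite !mulr0.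
have hd := inC_gamma_delta hC hg.
by rewrite !mul1r !mulr1 W_flip.
Qed.

Lemma TB_db n s n' s' e : IPw (n, s) * TB n s n' s' e = IPw (n', s') * TB n' s' n s e.
Proof.
rewrite /TB.
case: (eqVneq s' s) => [->|hs]; last first.
  by rewrite /= !mul0r !mulr0.
case: (eqVneq n' (flipE n e)) => [->|hn]; last first.
  by rewrite -flipE_eq (negbTE hn) /= !mul0r !mulr0.
rewrite flipE_invol !eqxx gamma_flip /=.
case hg: (gamma n e); first by rewrite !mul0r !mulr0.
case hd: (delta s e); last by rewrite !mul0r !mulr0.
rewrite inC_flip_delta //= !mul1r.
have h := W_flip n hd.
transitivity (IPw (n, s) * Wt n e * (2^-1 * (inC (n, s))%:R)); first ring.
by rewrite h; ring.
Qed.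

Lemma rate_db a b : IPw a * rate a b = IPw b * rate b a.
Proof.
case: a => n s; case: b => n' s'.
rewrite !rateE !mulrDr !mulr_sumr.
congr (_ + _ + _); first (by apply: eq_bigr => e _; apply: TA_db);
  first by apply: eq_bigr => e _; apply: TB_db.
apply: eq_bigr => x _; rewrite !mulr_sumr; apply: eq_bigr => e hex.
exact: termC_db.
Qed.


Local Notation Q := (Qgen end1 end2 p).
Local Notation Qp := (Qpow end1 end2 p).
Local Notation Pt := (Ptrans end1 end2 p).
Local Notation IP := (IP end1 end2 p).

Lemma global_balance b : \sum_a IPw a * Q a b = 0.
Proof.
rewrite (bigD1 b) //= /Qgen eqxx.
have -> : \sum_(a | a != b) IPw a * (if a == b then - \sum_(c | c != a) rate a c else rate a b)
   = \sum_(a | a != b) IPw b * rate b a.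
  by apply: eq_bigr => a hab; rewrite (negbTE hab) rate_db.
by rewrite -mulr_sumr mulrN addNr.
Qed.

Lemma Qp_IPw k b : \sum_a IPw a * Qp k.+1 a b = 0.
Proof.
rewrite /=.
under eq_bigr do rewrite mulr_sumr.
rewrite exchange_big /=.
apply: big1 => c _.
under eq_bigr do rewrite mulrA.
by rewrite -mulr_suml global_balance mul0r.
Qed.

Lemma Qp0_IPw b : \sum_a IPw a * Qp 0 a b = IPw b.
Proof.
rewrite (bigD1 b) //= eqxx mulr1 big1 ?addr0 // => a hab.
by rewrite (negbTE hab) mulr0.
Qed.

Lemma Qp_IP k b : \sum_a IP a * Qp k a b = (k == 0)%:R * IP b.
Proof.
rewrite /Defs.IP.
under eq_bigr do rewrite mulrAC.
rewrite -mulr_suml; case: k => [|k]; first by rewrite Qp0_IPw mul1r.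
by rewrite Qp_IPw !mul0r.
Qed.

Definition Mb : R := \sum_a \sum_c `|Q a c|.

Lemma Mb_ge0 : 0 <= Mb.
Proof. by apply: sumr_ge0 => a _; apply: sumr_ge0. Qed.

Lemma rowsum_le a : \sum_c `|Q a c| <= Mb.
Proof.
rewrite /Mb [X in _ <= X](bigD1 a) //= lerDl; apply: sumr_ge0 => b _; apply: sumr_ge0 => c _. exact: normr_ge0.
Qed.

Lemma Qp_bound k a b : `|Qp k a b| <= Mb ^+ k.
Proof.
elim: k a => [|k IH] a /=; first by case: (a == b); rewrite ?normr1 ?normr0 ?expr0.
rewrite exprS; apply: le_trans (ler_norm_sum _ _ _) _.
apply: (@le_trans _ _ (\sum_c `|Q a c| * Mb ^+ k)).
  by apply: ler_sum => c _; rewrite normrM ler_wpM2l.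
by rewrite -mulr_suml ler_wpM2r ?exprn_ge0 ?Mb_ge0 ?rowsum_le.
Qed.

Definition uterm (t : R) a b (k : nat) : R := t ^+ k / (k`!)%:R * Qp k a b.

Lemma Pt_series t a b : Pt t a b = limn (series (uterm t a b)).
Proof. by []. Qed.

Lemma uterm_bound t a b k : `|uterm t a b k| <= exp_coeff (`|t| * Mb) k.
Proof.
rewrite /uterm /exp_coeff /= normrM normrM normfV normr_nat normrX exprMn.
rewrite mulrAC; apply: ler_wpM2r; first by rewrite invr_ge0.
apply: ler_wpM2l; [exact: exprn_ge0 | exact: Qp_bound].
Qed.

Lemma Pt_cvg t a b : cvgn (series (uterm t a b)).
Proof.
apply: normed_cvg.
apply: (@series_le_cvg _ _ (exp_coeff (`|t| * Mb))) => //.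
- by move=> n /=.
- by move=> n; apply: exp_coeff_ge0; rewrite mulr_ge0 ?Mb_ge0.
- by move=> n /=; apply: uterm_bound.
- exact: is_cvg_series_exp_coeff.
Qed.

Definition Kb : R := limn (series (exp_coeff Mb)).

Lemma series_exp_le N : series (exp_coeff Mb) N <= Kb.
Proof.
apply: nondecreasing_cvgn_le; last exact: is_cvg_series_exp_coeff.
apply: nondecreasing_series => n _ _; apply: exp_coeff_ge0; exact: Mb_ge0.
Qed.

Lemma Kb_ge0 : 0 <= Kb.
Proof. by apply: le_trans (series_exp_le 0); rewrite /series /= big_geq. Qed.

Lemma Qp1 a b : Qp 1 a b = Q a b.
Proof.
rewrite /= (bigD1 b) //= eqxx mulr1 big1 ?addr0 // => c hcb.
by rewrite (negbTE hcb) mulr0.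
Qed.

Lemma Pt_small t a b : a != b -> 0 < t -> t <= 1 ->
  `|Pt t a b - t * Q a b| <= t ^+ 2 * Kb.
Proof.
move=> hab ht0 ht1.
have key : forall N, (2 <= N)%N -> `|series (uterm t a b) N - t * Q a b| <= t ^+ 2 * Kb.
  move=> N hN; rewrite /series /= big_ltn ?(leq_trans _ hN) // big_ltn //.
  rewrite {1 2}/uterm /= (negbTE hab) mulr0 add0r expr1 divr1 -/(Qp 1 a b) Qp1.
  rewrite addrAC subrr add0r.
  apply: le_trans (ler_norm_sum _ _ _) _.
  apply: (@le_trans _ _ (\sum_(2 <= i < N) t ^+ 2 * exp_coeff Mb i)).
    apply: ler_sum_nat => i /andP[hi _].
    apply: le_trans (uterm_bound _ _ _ _) _.
    rewrite /exp_coeff /= gtr0_norm // exprMn -mulrA; apply: ler_wpM2r.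
      by rewrite mulr_ge0 ?invr_ge0 ?exprn_ge0 ?Mb_ge0.
    by apply: ler_wiXn2l => //; apply: ltW.
  rewrite -mulr_sumr; apply: ler_wpM2l; first by rewrite exprn_ge0 // ltW.
  apply: (le_trans _ (series_exp_le N)).
  rewrite /series /= [X in _ <= X](big_cat_nat _ (n := 2)) //= lerDr.
  by apply: sumr_ge0 => i _; apply: exp_coeff_ge0; exact: Mb_ge0.
have hc : (fun N => `|series (uterm t a b) N - t * Q a b|) @ \oo --> `|Pt t a b - t * Q a b|.
  apply: cvg_norm; apply: cvgB; [exact: Pt_cvg | exact: cvg_cst].
apply: (cvgr_to_le hc).
by exists 2%N => // N /= hN; apply: key.
Qed.


Lemma Pderiv a b : a != b -> (fun t => t^-1 * Pt t a b) @ 0^'+ --> Q a b.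
Proof.
move=> hab; apply/cvgrPdist_le => eps heps.
have hK0 := Kb_ge0.
have hK1 : 0 < Kb + 1 by lra.
near=> t.
have ht0 : 0 < t by near: t; exact: nbhs_right_gt.
have ht1 : t <= 1 by near: t; apply: nbhs_right_ltW; exact: ltr01.
have hte : t <= eps / (Kb + 1) by near: t; apply: nbhs_right_ltW; exact: divr_gt0.
have h := Pt_small hab ht0 ht1.
have htn : t != 0 by rewrite gt_eqF.
rewrite (_ : Q a b - t^-1 * Pt t a b = - (t^-1 * (Pt t a b - t * Q a b))); last by field.
rewrite normrN normrM gtr0_norm ?invr_gt0 //.
apply: (@le_trans _ _ (t^-1 * (t ^+ 2 * Kb))); first by apply: ler_wpM2l; [rewrite invr_ge0 ltW | exact: h].
rewrite expr2 !mulrA mulVf // mul1r.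
rewrite ler_pdivlMr // in hte.
nra.
Unshelve. all: by end_near.
Qed.

Lemma law_IP s b : law_at end1 end2 p s b = IP b.
Proof.
set w := fun N => \sum_a IP a * series (uterm s a b) N.
have hw : w @ \oo --> law_at end1 end2 p s b.
  rewrite /law_at /w.
  apply: (@cvg_big _ _ +%R 0 xpredT add_continuous _ _ _ (fun a N => IP a * series (uterm s a b) N)).
  move=> a _; apply: cvgMr; exact: Pt_cvg.
have hw' : forall N, (1 <= N)%N -> w N = IP b.
  move=> N hN; rewrite /w /series /=.
  under eq_bigr do rewrite mulr_sumr.
  rewrite exchange_big /=.
  under eq_bigr do (under eq_bigr do rewrite /uterm mulrCA; rewrite -mulr_sumr Qp_IP).
  rewrite big_ltn // /= expr0 mul1r invr1 !mul1r [X in _ + X]big_nat_cond big1 ?addr0 // => k /andP[/andP[hk _] _].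
  by rewrite (_ : (k == 0)%N = false) ?mul0r ?mulr0 //; case: k hk.
apply/eqP; rewrite eq_le; apply/andP; split.
  by apply: (cvgr_to_le hw); exists 1%N => // N /= hN; rewrite hw'.
by apply: (cvgr_to_ge hw); exists 1%N => // N /= hN; rewrite hw'.
Qed.


Lemma flipV_neq (s : spin_conf V) x : (flipV s x == s) = false.
Proof.
apply/negbTE/negP => /eqP /ffunP /(_ x); rewrite ffunE eqxx.
by case: (s x).
Qed.

Lemma flipV_eqx (s : spin_conf V) x y : (flipV s x == flipV s y) = (x == y).
Proof.
apply/eqP/eqP => [|->] //; move/ffunP/(_ x); rewrite !ffunE eqxx.
by case: (eqVneq x y) => // _; case: (s x).
Qed.

Lemma prod_bool (F : E -> bool) : \prod_f (F f)%:R = ([forall f, F f])%:R :> R.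
Proof.
case: (boolP [forall f, F f]) => [/forallP h|/forallPn [f hf]].
  by rewrite big1 // => f _; rewrite h.
by rewrite (bigD1 f) //= (negbTE hf) mul0r.
Qed.

Lemma IPw_inC (n : edge_conf E) (s : spin_conf V) : IPw (n, s) != 0 -> inC (n, s).
Proof.
apply: contraR => /forallPn [f]; rewrite negb_imply /= => /andP[nf hd].
by rewrite /IPweight (bigD1 f) //= nf (negbTE hd) mulr0 mul0r.
Qed.

Lemma inC_flip_b (n : edge_conf E) (s : spin_conf V) x e :
  inC (n, s) -> e \in Ex x -> (forall f, f \in Ex x -> f != e -> ~~ n f) ->
  ~~ delta s e -> inC (flipE n e, flipV s x).
Proof.
move=> /forallP hC hex hall hd; apply/forallP => f /=.
case: (eqVneq f e) => [->|fe]; first by rewrite delta_flipV_in // hd implybT.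
rewrite flipE_ne //; case hf: (f \in Ex x); first by rewrite (negbTE (hall f hf fe)).
by rewrite delta_flipV_out ?hf //; exact: (hC f).
Qed.

Lemma sum_snd (F : state V E -> R) sg : \sum_(a | a.2 == sg) F a = \sum_n F (n, sg).
Proof.
transitivity (\sum_(a | xpredT a.1 && (a.2 == sg)) F (a.1, a.2)).
  by apply: eq_big => [[n s]|[n s] _].
rewrite -(pair_big xpredT (fun s => s == sg) (fun n s => F (n, s))) /=.
by apply: eq_bigr => n _; rewrite big_pred1_eq.
Qed.

Section Fixed.
Variables (x : V) (sg : spin_conf V).

Definition Ind (n : edge_conf E) e :=
  [&& ~~ gamma n e, n e == delta sg e & [forall f in Ex x, (f != e) ==> ~~ n f]].

Lemma rate_flipx n n' : rate (n, sg) (n', flipV sg x) =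
  \sum_(e in Ex x) (indC n sg n' (flipV sg x) x e)%:R * valC n sg n' (flipV sg x) e.
Proof.
rewrite rateE [X in X + _ + _]big1 ?add0r; last by move=> e _; rewrite /TA flipV_neq /= !mul0r.
rewrite [X in X + _]big1 ?add0r; last by move=> e _; rewrite /TB flipV_neq /= !mul0r.
rewrite (bigD1 x) //= [X in _ + X]big1 ?addr0 // => y hy; apply: big1 => e _.
by rewrite /indC flipV_eqx eq_sym (negbTE hy) /= mul0r.
Qed.

Lemma sum_nprime n : \sum_n' rate (n, sg) (n', flipV sg x) =
  \sum_(e in Ex x) (Ind n e)%:R * valC n sg (flipE n e) (flipV sg x) e.
Proof.
under eq_bigr do rewrite rate_flipx.
rewrite exchange_big /=; apply: eq_bigr => e hex.
rewrite (bigD1 (flipE n e)) //= big1 ?addr0.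
  by rewrite /indC !eqxx.
by move=> n' hn'; rewrite /indC eqxx (negbTE hn') /= mul0r.
Qed.

Definition Gf e f (b : bool) : R :=
  (if b then p * (delta sg f)%:R else 1 - p) *
  (if f == e then b == delta sg e else (f \in Ex x) ==> ~~ b)%:R.

Definition ce e : R := 1 / 4 * (if delta sg e then 1 - p else p).

Lemma Ind_forall n e : e \in Ex x ->
  Ind n e = [forall f, if f == e then n f == delta sg e else (f \in Ex x) ==> ~~ n f].
Proof.
move=> hex; apply/idP/forallP.
  case/and3P => _ hd /forall_inP hall f.
  case: (eqVneq f e) => [->|fe] //; apply/implyP => hf.
  by have := hall f hf; rewrite fe.
move=> h.
have hall : [forall f in Ex x, (f != e) ==> ~~ n f].
  apply/forall_inP => f hf; apply/implyP => fe.
  by have := h f; rewrite (negbTE fe) hf.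
have := h e; rewrite eqxx => hd.
by rewrite /Ind hd hall (gamma_isolated hex hall).
Qed.

Lemma per_n n e : e \in Ex x ->
  IPw (n, sg) * ((Ind n e)%:R * valC n sg (flipE n e) (flipV sg x) e) =
  ce e * \prod_f Gf e f (n f).
Proof.
move=> hex.
rewrite /Gf big_split /= prod_bool -Ind_forall // -/(IPweight end1 end2 p (n, sg)).
case hI: (Ind n e); last by rewrite !mul0r !mulr0.
rewrite !mul1r mulr1 mulrC.
case: (eqVneq (IPw (n, sg)) 0) => [->|hw]; first by rewrite !mulr0.
have hC := IPw_inC hw.
move: hI => /and3P[_ /eqP hd /forall_inP hall].
rewrite /valC /ce -hd hC.
case hne: (n e) => /=.
  by ring.
rewrite inC_flip_b //; last by rewrite -hd hne.
  by rewrite /=; ring.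
by move=> f hf fe; have := hall f hf; rewrite fe.
Qed.

Definition kx := #|[set e in Ex x | delta sg e]|.

Lemma Zsg_prod : \sum_n IPw (n, sg) = \prod_f (p * (delta sg f)%:R + (1 - p)).
Proof.
rewrite -(bigA_distr_bigA (fun f b => if b then p * (delta sg f)%:R else 1 - p)).
by apply: eq_bigr => f _; rewrite big_bool.
Qed.

Lemma Se_val e : e \in Ex x ->
  \sum_n IPw (n, sg) * ((Ind n e)%:R * valC n sg (flipE n e) (flipV sg x) e) =
  1 / 4 * p * (1 - p) ^+ kx * \sum_n IPw (n, sg).
Proof.
move=> hex.
under eq_bigr do rewrite per_n //.
rewrite -mulr_sumr -(bigA_distr_bigA (Gf e)) Zsg_prod.
rewrite /kx -prodr_const [\prod_(i in _) _]big_mkcond /= -mulrA -big_split /=.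
rewrite (bigD1 e) //= [X in _ = _ * X](bigD1 e) //= !mulrA.
congr (_ * _).
  rewrite !big_bool /Gf /= eqxx inE hex /ce /=.
  by case: (delta sg e) => /=; ring.
apply: eq_bigr => f fe; rewrite !big_bool /Gf /= (negbTE fe) inE.
by case: (f \in Ex x); case: (delta sg f) => /=; ring.
Qed.

Lemma core :
  \sum_(a | a.2 == sg) \sum_(b | b.2 == flipV sg x) IPw a * rate a b =
  1 / 4 * (#|Ex x|)%:R * p * (1 - p) ^+ kx * \sum_(a | a.2 == sg) IPw a.
Proof.
rewrite !sum_snd.
under eq_bigr do rewrite sum_snd -mulr_sumr sum_nprime mulr_sumr.
rewrite exchange_big /=.
under eq_bigr => e hex do rewrite Se_val //.
rewrite sumr_const -mulr_natl; ring.
Qed.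

End Fixed.

End Comb.

Unset Implicit Arguments.

Theorem proposition9 (V E : finType) (end1 end2 : E -> V) (R : realType) (p : R)
  (hG : simple_graph end1 end2) (hp0 : 0 <= p) (hp1 : p <= 1)
  (x : V) (sg : spin_conf V) (s : R) (hs : 0 <= s)
  (hpos : 0 < prob_spin_at end1 end2 p s sg) :
  (fun t : R => t^-1 * cond_prob end1 end2 p s t sg (flipV sg x)) @ 0^'+ -->
    (1 / 4 * (#|Ex end1 end2 x|)%:R * p
      * (1 - p) ^+ #|[set e in Ex end1 end2 x | delta end1 end2 sg e]| : R).
Proof.
have hlaw : law_at end1 end2 p s = IP end1 end2 p.
  by apply: funext => b; apply: law_IP.
set Pz := prob_spin_at end1 end2 p s sg.
have hPz : Pz = \sum_(a | a.2 == sg) IP end1 end2 p a by rewrite /Pz /prob_spin_at hlaw.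
have E1 : (fun t : R => t^-1 * cond_prob end1 end2 p s t sg (flipV sg x)) =
  (fun t => (\sum_(a | a.2 == sg) \sum_(b | b.2 == flipV sg x)
      IP end1 end2 p a * (t^-1 * Ptrans end1 end2 p t a b)) * Pz^-1).
  apply: funext => t; rewrite /cond_prob /prob_spin_pair -/Pz hlaw mulrA mulr_sumr.
  congr (_ * _); apply: eq_bigr => a _; rewrite mulr_sumr; apply: eq_bigr => b _.
  by rewrite mulrCA.
rewrite E1.
set Z := \sum_b IPweight end1 end2 p b.
have hsum : \sum_(a | a.2 == sg) \sum_(b | b.2 == flipV sg x)
      IP end1 end2 p a * Qgen end1 end2 p a b =
    (1 / 4 * (#|Ex end1 end2 x|)%:R * p
      * (1 - p) ^+ #|[set e in Ex end1 end2 x | delta end1 end2 sg e]|) * Pz.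
  transitivity ((\sum_(a | a.2 == sg) \sum_(b | b.2 == flipV sg x)
      IPweight end1 end2 p a * rate end1 end2 p a b) * Z^-1).
    rewrite mulr_suml; apply: eq_bigr => a /eqP ha; rewrite mulr_suml; apply: eq_bigr => b /eqP hb.
    have hab : a != b.
      by apply/eqP => hab; move: hb; rewrite -hab ha => /eqP; rewrite eq_sym flipV_neq.
    by rewrite /Qgen (negbTE hab) /IP mulrAC.
  rewrite (core _ hG) hPz /Defs.IP -mulr_suml /kx; ring.
have hPz0 : Pz != 0 by rewrite gt_eqF.
have -> : (1 / 4 * (#|Ex end1 end2 x|)%:R * p
      * (1 - p) ^+ #|[set e in Ex end1 end2 x | delta end1 end2 sg e]| : R) =
   (\sum_(a | a.2 == sg) \sum_(b | b.2 == flipV sg x)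
      IP end1 end2 p a * Qgen end1 end2 p a b) * Pz^-1.
  by rewrite hsum mulfK.
apply: cvgMl.
apply: (@cvg_big _ _ +%R 0 _ add_continuous _ _ _
   (fun a t => \sum_(b | b.2 == flipV sg x) IP end1 end2 p a * (t^-1 * Ptrans end1 end2 p t a b))).
move=> a /eqP ha.
apply: (@cvg_big _ _ +%R 0 _ add_continuous _ _ _
   (fun b t => IP end1 end2 p a * (t^-1 * Ptrans end1 end2 p t a b))).
move=> b /eqP hb.
apply: cvgMr; apply: Pderiv => //.
by apply/eqP => hab; move: hb; rewrite -hab ha => /eqP; rewrite eq_sym flipV_neq.
Qed.
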